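(* Let $\zeta=1.2$ and $\beta(t)=\inf_{1<\alpha\le 3}\min\{\log t/\log\alpha,\ t\}\,t^{-\zeta/\alpha}$. For any policy, any arm $i\in[n]$ and any round $t\ge1$, with $\sigma_i^2=w^\star_i(1-w^\star_i)$, $$\mathbb P\Big(\bar w_{i,t}-w^\star_i>\sqrt{\tfrac{8\zeta\sigma_i^2\log t}{N^w_{i,t-1}}}+\tfrac{13.3\,\zeta\log t}{N^w_{i,t-1}}\Big)\le 2\beta(t).$$
   Context: Sequential search-and-stop setting: $\mathcal G$ is a DAG on $[n]$; a search is a tuple of distinct vertices in which every in-neighbor of each entry appears earlier. Hider vectors $W_t\in\{0,1\}^n$, $t=1,2,\dots$, are i.i.d., one-hot, with $\mathbb P(W_{i,t}=1)=w^\star_i$, $\sum_iw^\star_i=1$. A policy selects at the start of round $t$ a search $s_t$ as a (possibly randomized) function of past observations, and observes $W_{i,t}$ for all $i\in s_t$. Define $N^w_{i,t-1}=\sum_{u=1}^{t-1}\mathbf 1\{i\in s_u\}$, $\hat w_{i,t-1}=\sum_{u=1}^{t-1}\mathbf 1\{i\in s_u\}W_{i,u}/N^w_{i,t-1}$ (with $0/0=0$), and $\bar w_{i,t}=\min\Big\{\hat w_{i,t-1}+\sqrt{\tfrac{2\zeta\hat w_{i,t-1}(1-\hat w_{i,t-1})\log t}{N^w_{i,t-1}}}+\tfrac{3\zeta\log t}{N^w_{i,t-1}},\,1\Big\}$, with the convention $x/0=+\infty$ for $x\ge0$ (so $\bar w_{i,t}=1$ when $N^w_{i,t-1}=0$;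 in the event of the claim, a zero counter makes the threshold $+\infty$). *)

(* Defs.v *)
From Stdlib Require Import Reals Lra Lia List Relations ClassicalEpsilon.
Import ListNotations.
Open Scope R_scope.

Definition Rsum (l : list R) : R := fold_right Rplus 0 l.

(* ---------- the DAG G on [n] = {0,...,n-1} ----------
   E j i means "j is an in-neighbour of i" (edge j -> i). *)
Definition is_dag (n : nat) (E : nat -> nat -> Prop) : Prop :=
  (forall j i, E j i -> (j < n)%nat /\ (i < n)%nat) /\
  (forall i, ~ clos_trans nat E i i).

Definition is_search (n : nat) (E : nat -> nat -> Prop) (s : list nat) : Prop :=
  NoDup s /\ (forall i, In i s -> (i < n)%nat) /\
  (forall k j, (k < length s)%nat -> E j (nth k s 0%nat) -> In j (firstn k s)).

(* ---------- trajectories ----------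
   A round is recorded as (s_u, h_u) where h_u is the (unique) index with
   W_{h_u,u} = 1 (hider vectors are one-hot). *)
Definition traj := list (list nat * nat).

Definition memb (i : nat) (s : list nat) : bool := existsb (Nat.eqb i) s.

Definition observe (tr : traj) : list (list nat * list bool) :=
  map (fun p => (fst p, map (fun i => Nat.eqb i (snd p)) (fst p))) tr.

(* A (possibly randomized) policy: given the observed history, a finitely
   supported distribution over searches, given as (probability, search) list. *)
Definition policy := list (list nat * list bool) -> list (R * list nat).

Definition valid_policy (n : nat) (E : nat -> nat -> Prop) (pol : policy) : Prop :=
  forall hist,
    (forall p s, In (p, s) (pol hist) -> 0 <= p /\ is_search n E s) /\
    Rsum (map fst (pol hist)) = 1.

Definition is_distr (n : nat) (w : nat -> R) : Prop :=
  (forall i, (i < n)%nat -> 0 <= w i) /\ Rsum (map w (seq 0 n)) = 1.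

Fixpoint expect (n : nat) (pol : policy) (w : nat -> R) (k : nat)
    (tr : traj) (F : traj -> R) : R :=
  match k with
  | O => F tr
  | S k' =>
      Rsum (map (fun ps =>
        Rsum (map (fun h => fst ps * w h * expect n pol w k' (tr ++ [(snd ps, h)]) F)
                  (seq 0 n)))
        (pol (observe tr)))
  end.

(* N^w_{i,t-1} computed from the trajectory of the first t-1 rounds *)
Definition Nw (i : nat) (tr : traj) : nat :=
  length (filter (fun p => memb i (fst p)) tr).

Definition hits (i : nat) (tr : traj) : nat :=
  length (filter (fun p => andb (memb i (fst p)) (Nat.eqb (snd p) i)) tr).

Definition hat_w (i : nat) (tr : traj) : R :=
  if Nat.eqb (Nw i tr) 0 then 0 else INR (hits i tr) / INR (Nw i tr).

Definition zeta : R := 6 / 5.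

Definition bar_w (i : nat) (t : nat) (tr : traj) : R :=
  if Nat.eqb (Nw i tr) 0 then 1 else
  let N := INR (Nw i tr) in
  let h := hat_w i tr in
  Rmin (h + sqrt (2 * zeta * h * (1 - h) * ln (INR t) / N)
          + 3 * zeta * ln (INR t) / N) 1.

(* Indicator of the event
   bar_w_{i,t} - w_i > sqrt(8 zeta sigma^2 log t / N) + 13.3 zeta log t / N,
   with threshold +infinity (event false) when N = 0. *)
Definition bad_event (w : nat -> R) (i t : nat) (tr : traj) : R :=
  if Nat.eqb (Nw i tr) 0 then 0 else
  let N := INR (Nw i tr) in
  let sigma2 := w i * (1 - w i) in
  if Rlt_dec (sqrt (8 * zeta * sigma2 * ln (INR t) / N)
              + (133 / 10) * zeta * ln (INR t) / N)
             (bar_w i t tr - w i)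
  then 1 else 0.

Definition beta_set (t : nat) (x : R) : Prop :=
  exists a, 1 < a <= 3 /\
    x = Rmin (ln (INR t) / ln a) (INR t) * Rpower (INR t) (- zeta / a).

Definition is_glb (S : R -> Prop) (b : R) : Prop :=
  (forall x, S x -> b <= x) /\ (forall c, (forall x, S x -> c <= x) -> c <= b).

Definition beta (t : nat) : R :=
  epsilon (inhabits 0) (fun b => is_glb (beta_set t) b).

(* Main.v *)
Require Import Defs.
From Stdlib Require Import Reals Lra Lia Psatz List Relations ClassicalEpsilon ZArith.
From Coquelicot Require Coquelicot.
Import ListNotations.
Open Scope R_scope.

Module TaylorAux.
Import Coquelicot.Coquelicot.

Lemma Dn_exp : forall k x, Derive_n exp k x = exp x.
Proof.
  induction k; intros x; simpl; auto.
  rewrite (Derive_ext _ exp x IHk).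
  apply is_derive_unique. apply is_derive_exp.
Qed.

Lemma exdn_exp : forall k x, ex_derive_n exp k x.
Proof.
  destruct k; intros x; simpl; auto.
  apply (ex_derive_ext exp). intros; rewrite Dn_exp; auto.
  eexists; apply is_derive_exp.
Qed.

Lemma exp_pos_up (y : R) : 0 <= y <= 1 -> exp y <= 1 + y + y^2/2 + y^3/2.
Proof.
  intros Hy. destruct (Req_dec y 0) as [->|Hy0].
  { rewrite exp_0; lra. }
  destruct (Taylor_Lagrange exp 2 0 y ltac:(lra)) as [z [Hz E]].
  { intros; apply exdn_exp. }
  rewrite E. change (sum_f_R0 ?f 2) with (f 0%nat + f 1%nat + f 2%nat).
  rewrite !Dn_exp, exp_0, !Rminus_0_r.
  assert (exp z <= 3).
  { apply Rle_trans with (exp 1). apply Rlt_le, exp_increasing; lra. apply exp_le_3. }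
  assert (0 <= y^3) by (apply pow_le; lra).
  simpl. nra.
Qed.
End TaylorAux.

Lemma exp_neg_up (y : R) : 0 <= y -> exp (- y) <= 1 - y + y^2/2.
Proof.
  intros Hy. pose proof (Coquelicot.ElemFct.exp_ge_taylor y 3 Hy) as H. simpl in H.
  assert (Hpos : 0 < exp y) by apply exp_pos.
  rewrite exp_Ropp.
  assert (1 + y + y^2/2 + y^3/6 <= exp y) by (simpl; lra).
  apply Rmult_le_reg_l with (exp y); auto.
  rewrite Rinv_r by lra.
  assert (0 <= 1 - y + y^2/2) by nra.
  apply Rle_trans with ((1 + y + y^2/2 + y^3/6) * (1 - y + y^2/2)).
  - nra.
  - apply Rmult_le_compat_r; lra.
Qed.


Lemma Rsum_app {A} (f : A -> R) l1 l2 : Rsum (map f (l1 ++ l2)) = Rsum (map f l1) + Rsum (map f l2).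
Proof. induction l1; simpl; [ring| rewrite IHl1; ring]. Qed.

Lemma Rsum_le {A} (f g : A -> R) l : (forall x, In x l -> f x <= g x) ->
  Rsum (map f l) <= Rsum (map g l).
Proof.
  induction l; simpl; intros H; [lra|].
  apply Rplus_le_compat; auto.
Qed.

Lemma Rsum_ext {A} (f g : A -> R) l : (forall x, In x l -> f x = g x) ->
  Rsum (map f l) = Rsum (map g l).
Proof.
  induction l; simpl; intros H; auto. rewrite H, IHl; auto.
Qed.

Lemma Rsum_scal {A} c (f : A -> R) l : Rsum (map (fun x => c * f x) l) = c * Rsum (map f l).
Proof. induction l; simpl; [ring| rewrite IHl; ring]. Qed.

Lemma Rsum_plus {A} (f g : A -> R) l :
  Rsum (map (fun x => f x + g x) l) = Rsum (map f l) + Rsum (map g l).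
Proof. induction l; simpl; [ring| rewrite IHl; ring]. Qed.

Lemma Rsum_nonneg {A} (f : A -> R) l : (forall x, In x l -> 0 <= f x) -> 0 <= Rsum (map f l).
Proof. induction l; simpl; intros H; [lra|]. pose proof (H a (or_introl eq_refl)).
  assert (0 <= Rsum (map f l)) by auto. lra. Qed.

Lemma Rsum_elem {A} (f : A -> R) l y : (forall x, In x l -> 0 <= f x) -> In y l ->
  f y <= Rsum (map f l).
Proof.
  induction l; simpl; intros H Hy; [tauto|].
  destruct Hy as [<-|Hy].
  - assert (0 <= Rsum (map f l)) by (apply Rsum_nonneg; auto). lra.
  - assert (f y <= Rsum (map f l)) by auto. pose proof (H a (or_introl eq_refl)). lra.
Qed.

Lemma Rsum_swap {A B} (g : A -> B -> R) la lb :
  Rsum (map (fun a => Rsum (map (fun b => g a b) lb)) la) =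
  Rsum (map (fun b => Rsum (map (fun a => g a b) la)) lb).
Proof.
  induction la; simpl.
  - induction lb; simpl; auto. rewrite <- IHlb; ring.
  - rewrite IHla. rewrite <- Rsum_plus. reflexivity.
Qed.

Lemma Rsum_ind_notin (w : nat -> R) i A B l : ~ In i l ->
  Rsum (map (fun h => w h * (if Nat.eqb h i then A else B)) l) = B * Rsum (map w l).
Proof.
  induction l; simpl; intros H; [ring|].
  destruct (Nat.eqb_spec a i); [subst; tauto|].
  rewrite IHl by tauto. ring.
Qed.

Lemma Rsum_ind (w : nat -> R) i A B l : NoDup l -> In i l ->
  Rsum (map (fun h => w h * (if Nat.eqb h i then A else B)) l) = B * Rsum (map w l) + (A - B) * w i.
Proof.
  induction l; simpl; intros Hn H; [tauto|].
  inversion Hn; subst.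
  destruct (Nat.eqb_spec a i).
  - subst. rewrite Rsum_ind_notin by auto. ring.
  - destruct H as [H|H]; [congruence|]. rewrite IHl by auto. ring.
Qed.

Lemma Rsum_le_total (w : nat -> R) l i : (forall x, In x l -> 0 <= w x) -> In i l -> w i <= Rsum (map w l).
Proof. intros; apply Rsum_elem; auto. Qed.

Section Expect.
Variables (n : nat) (E : nat -> nat -> Prop) (pol : policy) (w : nat -> R).
Hypothesis Hpol : valid_policy n E pol.
Hypothesis Hw : is_distr n w.

Lemma w_nonneg h : In h (seq 0 n) -> 0 <= w h.
Proof. intros H. apply in_seq in H. apply (proj1 Hw). lia. Qed.

Lemma expect_super (F : traj -> R) :
  (forall tr p s, In (p, s) (pol (observe tr)) ->
     Rsum (map (fun h => w h * F (tr ++ [(s, h)])) (seq 0 n)) <= F tr) ->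
  forall k tr, expect n pol w k tr F <= F tr.
Proof.
  intros HF k. induction k; intros tr; simpl; [lra|].
  destruct (Hpol (observe tr)) as [Hp Hsum].
  apply Rle_trans with (Rsum (map (fun ps => fst ps * F tr) (pol (observe tr)))).
  - apply Rsum_le. intros [p s] Hin. simpl.
    pose proof (proj1 (Hp p s Hin)) as Hp0.
    apply Rle_trans with (Rsum (map (fun h => p * (w h * F (tr ++ [(s, h)]))) (seq 0 n))).
    + apply Rsum_le. intros h Hh.
      pose proof (w_nonneg h Hh).
      rewrite <- Rmult_assoc. apply Rmult_le_compat_l; [nra|]. apply IHk.
    + rewrite Rsum_scal. apply Rmult_le_compat_l; auto. apply (HF tr p s Hin).
  - rewrite (Rsum_ext _ (fun ps => F tr * fst ps)) by (intros; ring).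
    rewrite Rsum_scal, Hsum. lra.
Qed.

Lemma expect_mono (F G : traj -> R) : forall k tr,
  (forall tr', length tr' = (length tr + k)%nat -> F tr' <= G tr') ->
  expect n pol w k tr F <= expect n pol w k tr G.
Proof.
  induction k; intros tr H; simpl.
  - apply H. lia.
  - destruct (Hpol (observe tr)) as [Hp Hsum].
    apply Rsum_le. intros [p s] Hin. simpl.
    pose proof (proj1 (Hp p s Hin)) as Hp0.
    apply Rsum_le. intros h Hh. pose proof (w_nonneg h Hh).
    apply Rmult_le_compat_l; [nra|]. apply IHk.
    intros tr' Hl. apply H. rewrite Hl, length_app. simpl. lia.
Qed.
End Expect.

Lemma Nw_app i tr s h : Nw i (tr ++ [(s, h)]) = (Nw i tr + if memb i s then 1 else 0)%nat.
Proof. unfold Nw. rewrite filter_app, length_app. simpl. destruct (memb i s); simpl; lia. Qed.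

Lemma hits_app i tr s h : hits i (tr ++ [(s, h)]) =
  (hits i tr + if andb (memb i s) (Nat.eqb h i) then 1 else 0)%nat.
Proof. unfold hits. rewrite filter_app, length_app. simpl.
  destruct (andb (memb i s) (Nat.eqb h i)); simpl; lia. Qed.

Lemma hits_le_Nw i tr : (hits i tr <= Nw i tr)%nat.
Proof. unfold hits, Nw. induction tr; simpl; auto.
  destruct (memb i (fst a)); simpl; [destruct (Nat.eqb (snd a) i); simpl|]; lia. Qed.

Lemma Nw_le_length i tr : (Nw i tr <= length tr)%nat.
Proof. unfold Nw. apply filter_length_le. Qed.

Definition Gf (w : nat -> R) (i : nat) (lam c : R) (tr : traj) : R :=
  exp (lam * (INR (hits i tr) - w i * INR (Nw i tr)) - c * INR (Nw i tr)).

Lemma Gf_nil w i lam c : Gf w i lam c [] = 1.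
Proof. unfold Gf, hits, Nw; simpl. replace (lam * (0 - w i * 0) - c * 0) with 0 by ring. apply exp_0. Qed.

Lemma Gf_step n w i lam c tr s : is_distr n w -> (i < n)%nat ->
  (1 - w i + w i * exp lam) * exp (- (lam * w i)) <= exp c ->
  Rsum (map (fun h => w h * Gf w i lam c (tr ++ [(s, h)])) (seq 0 n)) <= Gf w i lam c tr.
Proof.
  intros [Hw0 Hw1] Hi Hc.
  assert (Hn : NoDup (seq 0 n)) by apply seq_NoDup.
  assert (Hin : In i (seq 0 n)) by (apply in_seq; lia).
  unfold Gf.
  destruct (memb i s) eqn:Hm.
  - set (X := exp (lam * (INR (hits i tr) - w i * INR (Nw i tr)) - c * INR (Nw i tr))).
    rewrite (Rsum_ext _ (fun h => w h * (if Nat.eqb h i then X * (exp lam * exp (- (lam * w i)) * exp (- c))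
                                              else X * (exp (- (lam * w i)) * exp (- c))))).
    2:{ intros h _. rewrite Nw_app, hits_app, Hm. simpl.
        destruct (Nat.eqb h i); rewrite !plus_INR; simpl; unfold X; rewrite <- !exp_plus; f_equal; f_equal; ring. }
    rewrite Rsum_ind by auto. rewrite Hw1.
    assert (0 < X) by apply exp_pos.
    assert (Hc' : (1 - w i + w i * exp lam) * exp (- (lam * w i)) * exp (- c) <= 1).
    { apply Rmult_le_reg_r with (exp c); [apply exp_pos|].
      rewrite Rmult_assoc, <- exp_plus. replace (- c + c) with 0 by ring. rewrite exp_0. lra. }
    replace (X * (exp (- (lam * w i)) * exp (- c)) * 1 +
       (X * (exp lam * exp (- (lam * w i)) * exp (- c)) - X * (exp (- (lam * w i)) * exp (- c))) * w i)
      with (X * ((1 - w i + w i * exp lam) * exp (- (lam * w i)) * exp (- c))) by ring.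
    nra.
  - rewrite (Rsum_ext _ (fun h => w h * exp (lam * (INR (hits i tr) - w i * INR (Nw i tr)) - c * INR (Nw i tr)))).
    2:{ intros h _. rewrite Nw_app, hits_app, Hm. simpl. rewrite Nat.add_0_r, Nat.add_0_r. reflexivity. }
    rewrite (Rsum_ext _ (fun h => exp (lam * (INR (hits i tr) - w i * INR (Nw i tr)) - c * INR (Nw i tr)) * w h)) by (intros; ring).
    rewrite Rsum_scal, Hw1. lra.
Qed.


Definition psi (lam : R) := lam^2/2 + 3/2*lam^3.

Lemma mgf (w lam : R) : 0 <= w <= 1 -> 0 < lam <= 1 ->
  (1 - w + w * exp lam) * exp (- (lam * w)) <= exp (w * (1 - w) * psi lam).
Proof.
  intros Hw Hl.
  assert (E1 : exp lam * exp (- (lam * w)) = exp (lam * (1 - w))).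
  { rewrite <- exp_plus; f_equal; ring. }
  pose proof (exp_neg_up (lam * w) ltac:(nra)) as H1.
  pose proof (TaylorAux.exp_pos_up (lam * (1 - w)) ltac:(split; nra)) as H2.
  apply Rle_trans with (1 + w * (1 - w) * psi lam); [|apply exp_ineq1_le].
  replace ((1 - w + w * exp lam) * exp (- (lam * w))) with
    ((1 - w) * exp (- (lam * w)) + w * (exp lam * exp (- (lam * w)))) by ring.
  rewrite E1. unfold psi.
  apply Rle_trans with ((1 - w) * (1 - lam * w + (lam * w) ^ 2 / 2) +
     w * (1 + lam * (1 - w) + (lam * (1 - w)) ^ 2 / 2 + (lam * (1 - w)) ^ 3 / 2)).
  - apply Rplus_le_compat; apply Rmult_le_compat_l; lra.
  - assert (0 <= w * (1-w)) by nra.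
    assert (0 <= lam^3) by (apply pow_le; lra).
    assert (0 <= (1-w)^2 <= 1) by (split; nra).
    assert (w * (1 - w) * lam^3 * (1-w)^2 <= w * (1-w) * lam^3 * 1).
    { apply Rmult_le_compat_l; [apply Rmult_le_pos|]; lra. }
    simpl in *. nra.
Qed.

Lemma sqrt_le_aux X Y : 0 <= Y -> X <= Y * Y -> sqrt X <= Y.
Proof.
  intros HY HX. destruct (Rle_lt_dec X 0) as [H|H].
  - rewrite (sqrt_neg_0 X H). auto.
  - rewrite <- (sqrt_square Y HY). apply sqrt_le_1_alt. auto.
Qed.

Lemma sqrt_sq X : 0 <= X -> sqrt X * sqrt X = X.
Proof. apply sqrt_sqrt. Qed.

Lemma core_real (N S w z L : R) : 0 < N -> 0 <= S <= N -> 0 <= w <= 1 -> 0 < z -> 0 <= L ->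
  sqrt (8 * z * (w * (1 - w)) * L / N) + 133/10 * z * L / N <
  Rmin (S/N + sqrt (2 * z * (S/N) * (1 - S/N) * L / N) + 3 * z * L / N) 1 - w ->
  S - N * w > sqrt (2 * (z * L) * (w * (1 - w)) * N) + 5 * (z * L) /\ 133/10 * (z * L) < N.
Proof.
  intros HN HS Hw Hz HL Hbad.
  set (h := S / N) in *.
  set (e := z * L / N).
  set (s2 := w * (1 - w)) in *.
  assert (He : 0 <= e) by (unfold e; apply Rmult_le_pos; [nra| apply Rlt_le, Rinv_0_lt_compat; auto]).
  assert (Hs2 : 0 <= s2) by (unfold s2; nra).
  assert (Hh : 0 <= h <= 1).
  { unfold h. split. apply Rmult_le_pos; [lra|apply Rlt_le, Rinv_0_lt_compat; auto].
    apply Rmult_le_reg_r with N; auto. unfold Rdiv. rewrite Rmult_assoc, Rinv_l by lra. lra. }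
  set (v := sqrt (2 * e * s2)).
  assert (Hv : 0 <= v) by apply sqrt_pos.
  assert (Hv2 : v * v = 2 * e * s2) by (apply sqrt_sq; nra).
  assert (E8 : sqrt (8 * z * s2 * L / N) = 2 * v).
  { apply sqrt_lem_1; [|lra|].
    - replace (8 * z * s2 * L / N) with (8 * s2 * e) by (unfold e, Rdiv; ring). nra.
    - replace (8 * z * s2 * L / N) with (4 * (2 * e * s2)) by (unfold e, Rdiv; ring). nra. }
  set (K := sqrt (2 * z * h * (1 - h) * L / N)).
  assert (HK : 0 <= K) by apply sqrt_pos.
  assert (HK2 : K * K = 2 * e * (h * (1 - h))).
  { unfold K. rewrite sqrt_sq. unfold e, Rdiv; ring.
    replace (2 * z * h * (1 - h) * L / N) with (2 * e * (h * (1 - h))) by (unfold e, Rdiv; ring).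
    apply Rmult_le_pos; [lra|nra]. }
  rewrite E8 in Hbad.
  assert (E133 : 133 / 10 * z * L / N = 133/10 * e) by (unfold e, Rdiv; ring).
  assert (E3 : 3 * z * L / N = 3 * e) by (unfold e, Rdiv; ring).
  rewrite E133 in Hbad. fold K in Hbad. rewrite E3 in Hbad.
  pose proof (Rmin_l (h + K + 3 * e) 1) as Hm1.
  pose proof (Rmin_r (h + K + 3 * e) 1) as Hm2.
  assert (HeN : e * N = z * L) by (unfold e, Rdiv; field; lra).
  split.
  - set (D := h - w).
    assert (HDdef : D = h - w) by reflexivity.
    assert (HD : D > v + 5 * e).
    { destruct (Rle_lt_dec D (v + 5 * e)) as [Hc|Hc]; [exfalso|lra].
      assert (Hhw : h * (1 - h) = s2 + D * (1 - 2 * w) - D * D) by (unfold D, s2; ring).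
      destruct (Rle_lt_dec 0 D) as [HD0|HD0].
      + assert (K <= v + 42/10 * e).
        { apply Rle_trans with (sqrt (K * K)). rewrite sqrt_square; lra.
          apply sqrt_le_aux; [lra|]. rewrite HK2, Hhw.
          assert (D * (1 - 2 * w) - D * D <= D) by nra.
          assert (2 * e * (s2 + D * (1 - 2 * w) - D * D) <= 2 * e * s2 + 2 * e * D) by nra.
          assert (2 * e * D <= 2 * e * (v + 5 * e)) by nra.
          nra. }
        lra.
      + assert (K <= v - D + e / 2).
        { apply Rle_trans with (sqrt (K * K)). rewrite sqrt_square; lra.
          apply sqrt_le_aux; [lra|]. rewrite HK2, Hhw.
          assert (D * (1 - 2 * w) <= - D) by nra. nra. }
        lra. }
    assert (HT : S - N * w = N * D) by (unfold D, h; field; lra).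
    rewrite HT.
    assert (Es : sqrt (2 * (z * L) * s2 * N) = N * v).
    { apply sqrt_lem_1; [|nra|].
      - apply Rmult_le_pos; [|lra]. apply Rmult_le_pos; [|lra]. nra.
      - replace (N * v * (N * v)) with (N * N * (v * v)) by ring. rewrite Hv2.
        rewrite <- HeN. ring. }
    rewrite Es. rewrite <- HeN.
    assert (N * D > N * (v + 5 * e)) by (apply Rmult_gt_compat_l; lra). lra.
  - assert (133/10 * e < 1) by lra.
    rewrite <- HeN. nra.
Qed.

Lemma geom_find (q y : R) (J : nat) : 0 < q < 1 -> q ^ J <= y <= 1 ->
  exists j, (j <= J)%nat /\ q ^ j <= y /\ q * y <= q ^ j.
Proof.
  intros Hq. induction J; intros Hy.
  - exists 0%nat. simpl in *. split; [lia|]. split; nra.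
  - destruct (Rle_lt_dec (q ^ J) y) as [H|H].
    + destruct (IHJ (conj H (proj2 Hy))) as [j [Hj1 Hj2]]. exists j. split; [lia|auto].
    + exists (S J). split; [lia|]. split; [tauto|]. simpl. nra.
Qed.

Lemma cover_real (a V T lam d : R) : 0 < a -> 0 <= V -> 0 < d < 1 -> 0 < lam ->
  T > sqrt (2 * a * V) + 5 * a ->
  ((sqrt (2 * a * V) <= 2 * a /\ lam = 1) \/
   ((1 - d) * (2 * a) <= lam * sqrt (2 * a * V) <= 2 * a)) ->
  lam * T - V * psi lam >= a * (1 - d^2).
Proof.
  intros Ha HV Hd Hl HT Hc.
  set (R := sqrt (2 * a * V)) in *.
  assert (HR : 0 <= R) by apply sqrt_pos.
  assert (HR2 : R * R = 2 * a * V) by (apply sqrt_sq; nra).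
  unfold psi. destruct Hc as [[Hc ->]|Hc].
  - assert (V <= 2 * a) by nra. nra.
  - set (u := lam * R) in *.
    assert (Hu : u * u = 2 * a * (V * lam ^ 2)) by (unfold u; simpl; nra).
    assert (Hv3 : V * lam^3 * (2 * a) <= 2 * a * lam * (2 * a)).
    { replace (V * lam^3 * (2*a)) with (lam * (u * u)) by (rewrite Hu; simpl; ring).
      assert (0 <= u) by nra.
      assert (u * u <= 2 * a * (2 * a)) by (apply Rmult_le_compat; lra). nra. }
    assert (V * lam^3 <= 2 * lam * a).
    { apply Rmult_le_reg_r with (2 * a); [lra|]. nra. }
    assert (HT' : lam * T >= u + 5 * a * lam) by (unfold u; nra).
    assert (V * lam^2 = u * u / (2 * a)) by (rewrite Hu; field; lra).
    assert (Hq : u - u * u / (4 * a) >= a * (1 - d^2)).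
    { apply Rle_ge, Rmult_le_reg_l with (4 * a); [lra|].
      replace (4 * a * (u - u * u / (4 * a))) with (4 * a * u - u * u) by (field; lra).
      assert ((2 * a - u) * (2 * a - u) <= (2 * a * d) * (2 * a * d)) by nra.
      simpl. nra. }
    assert (V * (lam ^ 2 / 2) = u * u / (4 * a)).
    { replace (V * (lam^2/2)) with ((V * lam^2)/2) by (field). rewrite H0. field; lra. }
    nra.
Qed.

Lemma exists_grid (a V T d : R) (J : nat) : 0 < a -> 0 <= V -> 0 < d < 1 ->
  T > sqrt (2 * a * V) + 5 * a ->
  (1 - d) ^ J * (1 - d) ^ J * V <= 2 * a ->
  exists j, (j <= J)%nat /\ (1 - d) ^ j * T - V * psi ((1 - d) ^ j) >= a * (1 - d^2).
Proof.
  intros Ha HV Hd HT HJ.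
  set (R := sqrt (2 * a * V)) in *.
  assert (HR : 0 <= R) by apply sqrt_pos.
  assert (HR2 : R * R = 2 * a * V) by (apply sqrt_sq; nra).
  destruct (Rle_lt_dec R (2 * a)) as [Hc|Hc].
  - exists 0%nat. split; [lia|]. apply cover_real; auto. simpl; lra.
  - set (q := 1 - d) in *.
    assert (Hq : 0 < q < 1) by (unfold q; lra).
    assert (HqJ : 0 < q ^ J) by (apply pow_lt; lra).
    assert (HqJR : q ^ J * R <= 2 * a).
    { apply Rsqr_incr_0_var; [|lra]. unfold Rsqr.
      replace (q ^ J * R * (q ^ J * R)) with (q^J * q^J * V * (2 * a)) by (replace (q^J*R*(q^J*R)) with (q^J*q^J*(R*R)) by ring; rewrite HR2; ring).
      nra. }
    set (y := 2 * a / R).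
    assert (HyR : y * R = 2 * a) by (unfold y; field; lra).
    assert (Hy1 : y <= 1).
    { apply Rmult_le_reg_r with R; [lra|]. lra. }
    assert (HyJ : q ^ J <= y).
    { apply Rmult_le_reg_r with R; [lra|]. lra. }
    destruct (geom_find q y J Hq (conj HyJ Hy1)) as [j [Hj1 [Hj2 Hj3]]].
    exists j. split; auto. apply cover_real; auto.
    + apply pow_lt; lra.
    + right. fold R. split.
      * replace ((1 - d) * (2 * a)) with (q * y * R) by (unfold q; rewrite Rmult_assoc, HyR; ring).
        apply Rmult_le_compat_r; lra.
      * rewrite <- HyR. apply Rmult_le_compat_r; lra.
Qed.

Lemma Rsum_const {A} (c : R) (l : list A) : Rsum (map (fun _ => c) l) = INR (length l) * c.
Proof. induction l; simpl length; [simpl; ring|]. rewrite S_INR. simpl. rewrite IHl. ring. Qed.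

Lemma w_le1 n w i : is_distr n w -> (i < n)%nat -> 0 <= w i <= 1.
Proof.
  intros [H0 H1] Hi. split; [auto|]. rewrite <- H1. apply Rsum_elem.
  - intros x Hx. apply in_seq in Hx. apply H0; lia.
  - apply in_seq; lia.
Qed.

Lemma ln_le_aux x y : 0 < x -> x <= y -> ln x <= ln y.
Proof. intros Hx Hxy. destruct (Rle_lt_or_eq_dec x y Hxy) as [H|<-]; [apply Rlt_le, ln_increasing; auto| lra]. Qed.

Lemma pow_le1 q j : 0 <= q <= 1 -> q ^ j <= 1.
Proof. intros Hq. induction j; simpl; [lra|]. assert (0 <= q ^ j) by (apply pow_le; lra). nra. Qed.

Section Core.
Variables (n : nat) (E : nat -> nat -> Prop) (pol : policy) (w : nat -> R) (i t : nat) (d : R) (J : nat).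
Hypothesis Hpol : valid_policy n E pol.
Hypothesis Hw : is_distr n w.
Hypothesis Hi : (i < n)%nat.
Hypothesis Ht : (1 <= t)%nat.
Let L := ln (INR t).
Let a := zeta * L.
Hypothesis Ha : 1/8 <= a.
Hypothesis Hd : 0 < d < 1.
Hypothesis HJ : (1 - d) ^ J * (1 - d) ^ J * INR t <= 1.
Let x := a * (1 - d ^ 2).
Let s2 := w i * (1 - w i).
Let q := 1 - d.
Let H (tr : traj) := Rsum (map (fun j => exp (- x) * Gf w i (q ^ j) (s2 * psi (q ^ j)) tr) (seq 0 (S J))).

Lemma H_nonneg tr : 0 <= H tr.
Proof.
  apply Rsum_nonneg. intros j _. unfold Gf. apply Rmult_le_pos; apply Rlt_le, exp_pos.
Qed.

Lemma bad_le_H tr : length tr = (t - 1)%nat -> bad_event w i t tr <= H tr.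
Proof.
  intros Hl. pose proof (H_nonneg tr) as HH.
  unfold bad_event. destruct (Nat.eqb_spec (Nw i tr) 0) as [Hz|Hz]; [lra|].
  cbv zeta.
  destruct (Rlt_dec _ _) as [Hb|Hb]; [|lra].
  pose proof (w_le1 n w i Hw Hi) as Hwi.
  assert (HN : 0 < INR (Nw i tr)) by (apply lt_0_INR; lia).
  assert (HSN : 0 <= INR (hits i tr) <= INR (Nw i tr)) by (split; [apply pos_INR| apply le_INR, hits_le_Nw]).
  assert (HL : 0 <= L).
  { unfold L. rewrite <- ln_1. apply ln_le_aux; [lra|]. apply (le_INR 1); lia. }
  assert (Hz' : 0 < zeta) by (unfold zeta; lra).
  unfold bar_w, hat_w in Hb. apply Nat.eqb_neq in Hz. rewrite Hz in Hb. cbv zeta in Hb.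
  destruct (core_real (INR (Nw i tr)) (INR (hits i tr)) (w i) zeta L HN HSN Hwi Hz' HL Hb) as [HT _].
  set (N := INR (Nw i tr)) in *. set (S := INR (hits i tr)) in *.
  assert (HV : 0 <= s2 * N) by (apply Rmult_le_pos; [unfold s2; nra| lra]).
  assert (HNt : N <= INR t).
  { unfold N. apply le_INR. pose proof (Nw_le_length i tr). lia. }
  assert (HJ' : q ^ J * q ^ J * (s2 * N) <= 2 * a).
  { assert (s2 <= 1/4) by (unfold s2; pose proof (Rle_0_sqr (w i - 1/2)); unfold Rsqr in *; nra).
    assert (0 <= q ^ J * q ^ J) by (apply Rmult_le_pos; apply pow_le; unfold q; lra).
    assert (q ^ J * q ^ J * (s2 * N) <= q ^ J * q ^ J * (1/4 * INR t)).
    { apply Rmult_le_compat_l; auto. apply Rmult_le_compat; unfold s2 in *; nra. }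
    fold q in HJ. nra. }
  assert (HT' : S - N * w i > sqrt (2 * a * (s2 * N)) + 5 * a).
  { replace (2 * a * (s2 * N)) with (2 * (zeta * L) * (w i * (1 - w i)) * N) by (unfold a, s2; ring).
    unfold a; lra. }
  assert (Ha0 : 0 < a) by lra.
  destruct (exists_grid a (s2 * N) (S - N * w i) d J Ha0 HV Hd HT' HJ') as [j [Hj Hx]].
  apply Rle_trans with (exp (- x) * Gf w i (q ^ j) (s2 * psi (q ^ j)) tr).
  - unfold Gf. rewrite <- exp_plus. fold N S.
    apply Rle_trans with (1 + (- x + ((q ^ j) * (S - w i * N) - s2 * psi (q ^ j) * N))); [|apply exp_ineq1_le].
    unfold x. fold q in Hx. nra.
  - unfold H. apply (Rsum_elem (fun j0 => exp (- x) * Gf w i (q ^ j0) (s2 * psi (q ^ j0)) tr)).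
    + intros; unfold Gf; apply Rmult_le_pos; apply Rlt_le, exp_pos.
    + apply in_seq. lia.
Qed.

Lemma core_bound : expect n pol w (t - 1) [] (bad_event w i t) <= INR (S J) * exp (- x).
Proof.
  apply Rle_trans with (expect n pol w (t - 1) [] H).
  { apply expect_mono with E; auto. intros tr' Hl. apply bad_le_H. simpl in Hl. auto. }
  apply Rle_trans with (H []).
  - apply expect_super with E; auto. intros tr p s _.
    unfold H.
    rewrite (Rsum_ext _ (fun h => Rsum (map (fun j => w h * (exp (- x) * Gf w i (q ^ j) (s2 * psi (q ^ j)) (tr ++ [(s, h)]))) (seq 0 (S J))))).
    2:{ intros h _. rewrite <- Rsum_scal. reflexivity. }
    rewrite (Rsum_swap (fun h j => w h * (exp (- x) * Gf w i (q ^ j) (s2 * psi (q ^ j)) (tr ++ [(s, h)])))).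
    apply Rsum_le. intros j Hj.
    rewrite (Rsum_ext _ (fun h => exp (- x) * (w h * Gf w i (q ^ j) (s2 * psi (q ^ j)) (tr ++ [(s, h)])))) by (intros; ring).
    rewrite Rsum_scal. apply Rmult_le_compat_l; [apply Rlt_le, exp_pos|].
    apply (Gf_step n w i); auto.
    apply mgf. apply (w_le1 n w i Hw Hi).
    split. apply pow_lt; unfold q; lra. apply pow_le1; unfold q; lra.
  - unfold H. rewrite (Rsum_ext _ (fun _ => exp (- x))).
    + rewrite Rsum_const, length_seq. lra.
    + intros j _. rewrite Gf_nil. ring.
Qed.
End Core.


Lemma ln_le_xm1 y : 0 < y -> ln y <= y - 1.
Proof. intros Hy. pose proof (exp_ineq1_le (ln y)). rewrite exp_ln in H; lra. Qed.

Lemma ln_ge_1m x : 0 < x -> 1 - / x <= ln x.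
Proof.
  intros Hx. pose proof (ln_le_xm1 (/ x) (Rinv_0_lt_compat _ Hx)).
  rewrite ln_Rinv in H by auto. lra.
Qed.

Lemma exists_J r : 0 <= r -> exists J : nat, r <= INR J <= r + 1.
Proof.
  intros Hr. destruct (archimed r) as [H1 H2].
  assert (Hz : (0 <= up r)%Z).
  { apply le_IZR. lra. }
  exists (Z.to_nat (up r)). rewrite INR_IZR_INZ, Z2Nat.id by auto. lra.
Qed.

Lemma exp_pow_aux y J : exp y ^ J = exp (INR J * y).
Proof.
  induction J; simpl pow. simpl INR. rewrite Rmult_0_l, exp_0; auto.
  rewrite IHJ, S_INR, <- exp_plus. f_equal; ring.
Qed.

Lemma pow_exp_bound d J : 0 < d < 1 -> (1 - d) ^ J <= exp (- (d * INR J)).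
Proof.
  intros Hd. replace (- (d * INR J)) with (INR J * (- d)) by ring.
  rewrite <- exp_pow_aux. apply pow_incr. split; [lra|].
  pose proof (exp_ineq1_le (- d)). lra.
Qed.

Lemma ln27 t : (27 <= t)%nat -> 3 <= ln (INR t).
Proof.
  intros Ht. assert (H27 : 27 <= INR t) by (apply (le_INR 27) in Ht; simpl in Ht; lra).
  assert (He3 : exp 3 <= 27).
  { replace 3 with (1 + 1 + 1) by ring. rewrite !exp_plus. pose proof exp_le_3.
    pose proof (exp_pos 1). nra. }
  rewrite <- (ln_exp 3). apply ln_le_aux; [apply exp_pos| lra].
Qed.

Lemma t27 t : (1 <= t)%nat -> 133/10 * (zeta * ln (INR t)) < INR t - 1 -> (27 <= t)%nat.
Proof.
  intros Ht H. destruct (le_lt_dec 27 t) as [|Hlt]; auto. exfalso.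
  assert (Ht0 : 1 <= INR t) by (apply (le_INR 1) in Ht; simpl in Ht; lra).
  set (s := sqrt (INR t)).
  assert (Hs : s * s = INR t) by (apply sqrt_sq; lra).
  assert (Hs0 : 0 < s) by (apply sqrt_lt_R0; lra).
  assert (HL : ln (INR t) = 2 * ln s).
  { rewrite <- Hs. rewrite ln_mult by auto. ring. }
  pose proof (ln_ge_1m s Hs0).
  assert (Hs1 : 1 <= s) by nra.
  assert (Hlt2 : (t <= 26)%nat) by lia. assert (Hlt' : INR t <= 26) by (apply (le_INR t 26) in Hlt2; simpl in Hlt2; lra).
  unfold zeta in H. rewrite HL in H.
  assert (Hinv : s * / s = 1) by (field; lra).
  assert (ln s >= 1 - / s) by lra.
  assert (s - 1 >= 0) by lra.
  assert (133/10 * (6/5 * (2 * (1 - / s))) < s * s - 1) by nra.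
  assert (133/10 * (6/5 * (2 * (s - 1))) < s * (s * s - 1)).
  { replace (s - 1) with (s * (1 - / s)) by (field; lra). nra. }
  nra.
Qed.

Lemma bad_needs n w i t tr : is_distr n w -> (i < n)%nat -> (1 <= t)%nat ->
  length tr = (t - 1)%nat -> bad_event w i t tr <> 0 ->
  133/10 * (zeta * ln (INR t)) < INR t - 1.
Proof.
  intros Hw Hi Ht Hl Hb.
  unfold bad_event in Hb. destruct (Nat.eqb_spec (Nw i tr) 0) as [Hz|Hz]; [lra|].
  cbv zeta in Hb. destruct (Rlt_dec _ _) as [Hb'|Hb']; [|lra].
  pose proof (w_le1 n w i Hw Hi) as Hwi.
  assert (HN : 0 < INR (Nw i tr)) by (apply lt_0_INR; lia).
  assert (HSN : 0 <= INR (hits i tr) <= INR (Nw i tr)) by (split; [apply pos_INR| apply le_INR, hits_le_Nw]).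
  assert (HL : 0 <= ln (INR t)).
  { rewrite <- ln_1. apply ln_le_aux; [lra|]. apply (le_INR 1); lia. }
  assert (Hz' : 0 < zeta) by (unfold zeta; lra).
  unfold bar_w, hat_w in Hb'. apply Nat.eqb_neq in Hz. rewrite Hz in Hb'. cbv zeta in Hb'.
  destruct (core_real _ _ _ _ _ HN HSN Hwi Hz' HL Hb') as [_ H2].
  assert (INR (Nw i tr) <= INR t - 1).
  { replace (INR t - 1) with (INR (t - 1)) by (rewrite minus_INR by lia; simpl; ring). apply le_INR. pose proof (Nw_le_length i tr). lia. }
  simpl in *. lra.
Qed.

Lemma beta_set_nonneg t x : (1 <= t)%nat -> beta_set t x -> 0 <= x.
Proof.
  intros Ht [al [Hal ->]].
  assert (HL : 0 <= ln (INR t)).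
  { rewrite <- ln_1. apply ln_le_aux; [lra|]. apply (le_INR 1); lia. }
  assert (Hla : 0 < ln al) by (rewrite <- ln_1; apply ln_increasing; lra).
  apply Rmult_le_pos; [|unfold Rpower; apply Rlt_le, exp_pos].
  apply Rmin_glb. apply Rmult_le_pos; [lra| apply Rlt_le, Rinv_0_lt_compat; auto]. apply pos_INR.
Qed.

Lemma beta_glb t : (1 <= t)%nat -> is_glb (beta_set t) (beta t).
Proof.
  intros Ht. unfold beta. apply epsilon_spec.
  set (F := fun y => beta_set t (- y)).
  assert (Hb : bound F).
  { exists 0. intros y Hy. unfold F in Hy. apply beta_set_nonneg in Hy; auto. lra. }
  assert (Hne : exists y, F y).
  { exists (- (Rmin (ln (INR t) / ln 2) (INR t) * Rpower (INR t) (- zeta / 2))).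
    unfold F. rewrite Ropp_involutive. exists 2. split; [lra|auto]. }
  destruct (completeness F Hb Hne) as [m [Hm1 Hm2]].
  exists (- m). split.
  - intros x Hx. assert (F (- x)) by (unfold F; rewrite Ropp_involutive; auto).
    pose proof (Hm1 _ H). lra.
  - intros c Hc. assert (is_upper_bound F (- c)).
    { intros y Hy. pose proof (Hc _ Hy). lra. }
    pose proof (Hm2 _ H). lra.
Qed.


Lemma poly_B L r p : 3 <= L -> 1 < r -> r * r <= 3 -> 0 < p -> p * p = r * r - 1 ->
  L * r * p + 4 * (p * p) <= 2 * L * (r + 1).
Proof.
  intros HL Hr Hr3 Hp Hpp.
  assert (H1 : 3 * r * p <= 6 * r + 10 - 4 * (r * r)).
  { apply Rsqr_incr_0_var; [|nra]. unfold Rsqr.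
    replace (3 * r * p * (3 * r * p)) with (9 * (r * r) * (p * p)) by ring. rewrite Hpp.
    nra. }
  nra.
Qed.

Lemma countB L al : 3 <= L -> 1 < al <= 3 ->
  L / (2 * sqrt (1 - / al)) + 2 <= 2 * (L / ln al).
Proof.
  intros HL Hal.
  set (r := sqrt al). set (p := sqrt (al - 1)).
  assert (Hr : r * r = al) by (apply sqrt_sq; lra).
  assert (Hr0 : 0 <= r) by apply sqrt_pos.
  assert (Hp : p * p = al - 1) by (apply sqrt_sq; lra).
  assert (Hp0 : 0 < p) by (apply sqrt_lt_R0; lra).
  assert (Hr1 : 1 < r) by nra.
  assert (Hd : sqrt (1 - / al) = p / r).
  { apply sqrt_lem_1.
    - assert (/ al < 1) by (rewrite <- Rinv_1; apply Rinv_lt_contravar; lra). lra.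
    - apply Rmult_le_pos; [lra| apply Rlt_le, Rinv_0_lt_compat; lra].
    - rewrite <- Hr. field_simplify; [| apply Rgt_not_eq; lra.. ]. replace (p^2) with (r^2-1) by (simpl; lra). reflexivity. }
  assert (Hln : ln al = 2 * ln r) by (rewrite <- Hr, ln_mult by lra; ring).
  assert (Hlr : ln r <= r - 1) by (apply ln_le_xm1; lra).
  assert (Hlr0 : 0 < ln r) by (rewrite <- ln_1; apply ln_increasing; lra).
  rewrite Hd, Hln.
  assert (Hkey : L * r * (r - 1) + 4 * p * (r - 1) <= 2 * p * L).
  { pose proof (poly_B L r p HL Hr1 ltac:(nra) Hp0 ltac:(nra)).
    apply Rmult_le_reg_r with (r + 1); [lra|].
    replace ((L * r * (r - 1) + 4 * p * (r - 1)) * (r + 1)) with (p * (L * r * p + 4 * (p * p))).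
    2:{ replace (p * (L * r * p + 4 * (p * p))) with (L * r * (p * p) + 4 * p * (p * p)) by ring.
        rewrite Hp, <- Hr. ring. }
    replace (2 * p * L * (r + 1)) with (p * (2 * L * (r + 1))) by ring.
    apply Rmult_le_compat_l; lra. }
  apply Rle_trans with (L / (r - 1)).
  - replace (L / (2 * (p / r))) with (L * r / (2 * p)) by (field; lra).
    apply Rmult_le_reg_r with (2 * p * (r - 1)); [nra|].
    replace ((L * r / (2 * p) + 2) * (2 * p * (r - 1))) with (L * r * (r - 1) + 4 * p * (r - 1)) by (field; lra).
    replace (L / (r - 1) * (2 * p * (r - 1))) with (2 * p * L) by (field; lra).
    auto.
  - replace (2 * (L / (2 * ln r))) with (L / ln r) by (field; lra).
    unfold Rdiv. apply Rmult_le_compat_l; [lra|]. apply Rinv_le_contravar; lra.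
Qed.

Lemma countA L : 3 <= L ->
  (L / (2 * / sqrt (zeta * L)) + 2) * exp 1 <= 2 * exp L.
Proof.
  intros HL. unfold zeta.
  set (sa := sqrt (6/5 * L)).
  assert (Hsa : sa * sa = 6/5 * L) by (apply sqrt_sq; lra).
  assert (Hsa0 : 0 < sa) by (apply sqrt_lt_R0; lra).
  replace (L / (2 * / sa)) with (L * sa / 2) by (field; lra).
  assert (Hsa1 : sa <= (6/5 * L + 1) / 2) by nra.
  pose proof (Coquelicot.ElemFct.exp_ge_taylor L 3 ltac:(lra)) as Ht. simpl in Ht.
  pose proof exp_le_3.
  assert (0 <= L * sa / 2 + 2) by nra.
  apply Rle_trans with ((L * sa / 2 + 2) * 3); [apply Rmult_le_compat_l; lra|].
  nra.
Qed.


Lemma HJ_lemma t d J : (1 <= t)%nat -> 0 < d < 1 -> ln (INR t) / (2 * d) <= INR J ->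
  (1 - d) ^ J * (1 - d) ^ J * INR t <= 1.
Proof.
  intros Ht Hd HJ.
  assert (Ht0 : 0 < INR t) by (apply lt_0_INR; lia).
  pose proof (pow_exp_bound d J Hd) as H1.
  assert (H0 : 0 <= (1 - d) ^ J) by (apply pow_le; lra).
  assert (H2 : exp (- (d * INR J)) <= exp (- (ln (INR t) / 2))).
  { destruct (Req_dec (d * INR J) (ln (INR t) / 2)) as [E|E]; [rewrite E; lra|].
    apply Rlt_le, exp_increasing.
    assert (ln (INR t) / 2 <= d * INR J).
    { apply Rmult_le_reg_l with (/ d). apply Rinv_0_lt_compat; lra.
      replace (/ d * (d * INR J)) with (INR J) by (field; lra).
      replace (/ d * (ln (INR t) / 2)) with (ln (INR t) / (2 * d)) by (field; lra). auto. }
    lra. }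
  assert (H3 : exp (- (ln (INR t) / 2)) * exp (- (ln (INR t) / 2)) * INR t = 1).
  { rewrite <- exp_plus. rewrite <- (exp_ln (INR t)) at 3 by auto. rewrite <- exp_plus.
    replace (- (ln (INR t) / 2) + - (ln (INR t) / 2) + ln (INR t)) with 0 by field. apply exp_0. }
  apply Rle_trans with (exp (- (ln (INR t) / 2)) * exp (- (ln (INR t) / 2)) * INR t); [|lra].
  apply Rmult_le_compat_r; [lra|].
  apply Rmult_le_compat; lra.
Qed.

Theorem mainTheorem7 :
  forall (n : nat) (E : nat -> nat -> Prop) (pol : policy) (w : nat -> R)
         (i t : nat),
    is_dag n E ->
    valid_policy n E pol ->
    is_distr n w ->
    (i < n)%nat ->
    (1 <= t)%nat ->
    expect n pol w (t - 1) nil (bad_event w i t) <= 2 * beta t.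
Proof.
  intros n E pol w i t _ Hpol Hw Hi Ht.
  pose proof (beta_glb t Ht) as [Hg1 Hg2].
  assert (Hb0 : 0 <= beta t) by (apply Hg2; intros; apply (beta_set_nonneg t); auto).
  destruct (le_lt_dec 27 t) as [H27|H27].
  2:{ apply Rle_trans with (expect n pol w (t - 1) [] (fun _ => 0)).
      - apply expect_mono with E; auto. intros tr Hl. simpl in Hl.
        destruct (Req_dec (bad_event w i t tr) 0) as [->|Hne]; [lra|].
        exfalso. pose proof (bad_needs n w i t tr Hw Hi Ht Hl Hne) as Hn.
        pose proof (t27 t Ht Hn). lia.
      - apply Rle_trans with 0; [|lra].
        apply (expect_super n E pol w Hpol Hw). intros tr p s _.
        rewrite (Rsum_ext _ (fun _ => 0)) by (intros; ring). rewrite Rsum_const. lra. }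
  set (P := expect n pol w (t - 1) [] (bad_event w i t)).
  set (L := ln (INR t)).
  assert (HL : 3 <= L) by (apply ln27; auto).
  assert (Ht0 : 0 < INR t) by (apply lt_0_INR; lia).
  assert (HtL : INR t = exp L) by (unfold L; rewrite exp_ln; auto).
  set (a := zeta * L).
  assert (Ha : 36/10 <= a) by (unfold a, zeta; lra).
  assert (Ha8 : 1/8 <= zeta * ln (INR t)) by (fold L a; lra).
  cut (P / 2 <= beta t); [lra|].
  apply Hg2. intros x [al [Hal ->]].
  assert (Hla : 0 < ln al) by (rewrite <- ln_1; apply ln_increasing; lra).
  assert (HRp : Rpower (INR t) (- zeta / al) = exp (- (a / al))).
  { unfold Rpower. f_equal. fold L. unfold a. field. lra. }
  rewrite HRp. fold L.
  destruct (Rle_lt_dec (L / ln al) (INR t)) as [HB|HA].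
  - rewrite Rmin_left by auto.
    set (d := sqrt (1 - / al)).
    assert (Hinv : 1/3 <= / al < 1).
    { split. replace (1/3) with (/3) by field. apply Rinv_le_contravar; lra.
      rewrite <- Rinv_1; apply Rinv_lt_contravar; lra. }
    assert (Hdd : d * d = 1 - / al) by (apply sqrt_sq; lra).
    assert (Hd0 : 0 < d) by (apply sqrt_lt_R0; lra).
    assert (Hd : 0 < d < 1) by (split; nra).
    destruct (exists_J (L / (2 * d))) as [J [HJ1 HJ2]].
    { apply Rmult_le_pos; [lra| apply Rlt_le, Rinv_0_lt_compat; lra]. }
    pose proof (HJ_lemma t d J Ht Hd HJ1) as HJ.
    pose proof (core_bound n E pol w i t d J Hpol Hw Hi Ht Ha8 Hd HJ) as Hc.
    fold P in Hc. fold L a in Hc.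
    replace (a * (1 - d ^ 2)) with (a / al) in Hc by (simpl; rewrite Rmult_1_r, Hdd; field; lra).
    pose proof (countB L al HL Hal) as Hcnt. fold d in Hcnt.
    rewrite S_INR in Hc.
    assert (0 < exp (- (a / al))) by apply exp_pos.
    nra.
  - rewrite Rmin_right by lra.
    set (sa := sqrt a).
    assert (Hsa : sa * sa = a) by (apply sqrt_sq; lra).
    assert (Hsa0 : 0 < sa) by (apply sqrt_lt_R0; lra).
    assert (Hsa1 : 1 < sa) by nra.
    set (d := / sa).
    assert (Hd : 0 < d < 1).
    { split. apply Rinv_0_lt_compat; lra. rewrite <- Rinv_1; apply Rinv_lt_contravar; lra. }
    destruct (exists_J (L / (2 * d))) as [J [HJ1 HJ2]].
    { apply Rmult_le_pos; [lra| apply Rlt_le, Rinv_0_lt_compat; lra]. }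
    pose proof (HJ_lemma t d J Ht Hd HJ1) as HJ.
    pose proof (core_bound n E pol w i t d J Hpol Hw Hi Ht Ha8 Hd HJ) as Hc.
    fold P in Hc. fold L a in Hc.
    replace (- (a * (1 - d ^ 2))) with (1 + - a) in Hc.
    2:{ unfold d. simpl. rewrite Rmult_1_r. field_simplify; [|lra]. replace (sa ^ 2) with a by (simpl; lra). field. lra. }
    rewrite exp_plus, S_INR in Hc.
    pose proof (countA L HL) as Hcnt. fold a sa d in Hcnt.
    assert (Hea : exp (- a) <= exp (- (a / al))).
    { apply Rlt_le, exp_increasing. apply Ropp_lt_contravar.
      apply Rmult_lt_reg_r with al; [lra|]. replace (a / al * al) with a by (field; lra). nra. }
    assert (0 < exp (- a)) by apply exp_pos.
    assert (0 < exp 1) by apply exp_pos.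
    assert (Hc2 : P <= (L / (2 * d) + 2) * exp 1 * exp (- a)).
    { apply Rle_trans with ((INR J + 1) * (exp 1 * exp (- a))); auto.
      rewrite <- Rmult_assoc. apply Rmult_le_compat_r; [lra|]. apply Rmult_le_compat_r; lra. }
    rewrite <- HtL in Hcnt.
    assert (P <= 2 * INR t * exp (- a)).
    { apply Rle_trans with ((L / (2 * d) + 2) * exp 1 * exp (- a)); auto.
      apply Rmult_le_compat_r; lra. }
    nra.
Qed.
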